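(* Let $(\beta_k)_{k\ge1}$ be non-negative reals with $\sum_{k\ge1}k\beta_k<\infty$, let $\beta(t)=\sum_{k\ge1}\beta_k t^k$, let $t^*=\inf\{t\ge0:\beta'(t)+\log(1-t)<0\}$ (so $t^*\in[0,1)$), and let $\gamma(t)=(1-t)\beta''(t)$. Then $\gamma(t^* )\le 1$. *)

(* Defs.v *)
From Stdlib Require Import Reals.
From Coquelicot Require Import Coquelicot.
Open Scope R_scope.

(* The coefficient sequence is b : nat -> R with beta_k = b k for k >= 1
   (b 0 is ignored).  beta(t) = sum_{k>=1} beta_k t^k. *)
Definition beta_fun (b : nat -> R) (t : R) : R :=
  Series (fun n => b (S n) * t ^ (S n)).

Definition is_inf (S : R -> Prop) (x : R) : Prop :=
  (forall t, S t -> x <= t) /\ (forall m, (forall t, S t -> m <= t) -> m <= x).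

(* Main.v *)
Require Import Defs.
From Stdlib Require Import Reals Lra Lia.
From Coquelicot Require Import Coquelicot.
Open Scope R_scope.

Definition aa (b : nat -> R) := PS_incr_1 (fun n => b (S n)).

Lemma beta_eq (b : nat -> R) t : beta_fun b t = PSeries (aa b) t.
Proof.
  unfold aa. rewrite PSeries_incr_1. unfold beta_fun, PSeries.
  rewrite <- Series_scal_l. apply Series_ext. intro n. simpl. ring.
Qed.

Lemma der_term (b : nat -> R) n : PS_derive (aa b) n = INR (S n) * b (S n).
Proof. reflexivity. Qed.

Lemma rad_ge1 (b : nat -> R)
  (hnn : forall k, (1 <= k)%nat -> 0 <= b k)
  (hsum : ex_series (fun n => INR (S n) * b (S n))) :
  Rbar_le 1 (CV_radius (aa b)).
Proof.
  rewrite <- CV_radius_derive.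
  destruct (Lub_Rbar_correct (CV_disk (PS_derive (aa b)))) as [H _].
  apply H. unfold CV_disk.
  eapply ex_series_ext; [|exact hsum]. intro n.
  rewrite der_term, pow1, Rmult_1_r. symmetry. apply Rabs_pos_eq.
  apply Rmult_le_pos. apply pos_INR. apply hnn. lia.
Qed.

Lemma in_rad (b : nat -> R)
  (hnn : forall k, (1 <= k)%nat -> 0 <= b k)
  (hsum : ex_series (fun n => INR (S n) * b (S n))) x :
  Rabs x < 1 -> Rbar_lt (Rabs x) (CV_radius (aa b)).
Proof.
  intro Hx. generalize (rad_ge1 b hnn hsum).
  destruct (CV_radius (aa b)); simpl; lra.
Qed.

Lemma Dbeta (b : nat -> R)
  (hnn : forall k, (1 <= k)%nat -> 0 <= b k)
  (hsum : ex_series (fun n => INR (S n) * b (S n))) x :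
  Rabs x < 1 -> Derive (beta_fun b) x = PSeries (PS_derive (aa b)) x.
Proof.
  intro Hx. rewrite (Derive_ext _ _ _ (beta_eq b)).
  apply Derive_PSeries. now apply in_rad.
Qed.

Lemma ex_D2 (b : nat -> R)
  (hnn : forall k, (1 <= k)%nat -> 0 <= b k)
  (hsum : ex_series (fun n => INR (S n) * b (S n))) x :
  Rabs x < 1 -> ex_derive (Derive (beta_fun b)) x.
Proof.
  intro Hx.
  apply (ex_derive_ext_loc (PSeries (PS_derive (aa b)))).
  - assert (Hp : 0 < 1 - Rabs x) by lra.
    exists (mkposreal _ Hp). intros y Hy. simpl in Hy.
    unfold ball in Hy; simpl in Hy; unfold AbsRing_ball, abs, minus, plus, opp in Hy; simpl in Hy.
    symmetry. apply Dbeta; auto.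
    assert (Hy' : Rabs (y - x) < 1 - Rabs x) by exact Hy.
    pose proof (Rabs_triang_inv y x). lra.
  - apply ex_derive_PSeries. rewrite CV_radius_derive. now apply in_rad.
Qed.

Lemma Dbeta_le (b : nat -> R)
  (hnn : forall k, (1 <= k)%nat -> 0 <= b k)
  (hsum : ex_series (fun n => INR (S n) * b (S n))) x :
  0 <= x < 1 -> Derive (beta_fun b) x <= Series (fun n => INR (S n) * b (S n)).
Proof.
  intro Hx. rewrite Dbeta; auto. 2: rewrite Rabs_pos_eq; lra.
  unfold PSeries. apply Series_le; auto. intro n. rewrite der_term.
  assert (0 <= INR (S n) * b (S n)) by (apply Rmult_le_pos; [apply pos_INR|apply hnn; lia]).
  assert (0 <= x ^ n <= 1).
  { split. apply pow_le; lra. rewrite <- (pow1 n). apply pow_incr; lra. }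
  split. apply Rmult_le_pos; lra.
  rewrite <- (Rmult_1_r (INR (S n) * b (S n))) at 2. apply Rmult_le_compat_l; lra.
Qed.

Lemma deriv_sign (f : R -> R) x l :
  is_derive f x l -> 0 < l ->
  exists d, 0 < d /\ forall h, h <> 0 -> Rabs h < d -> 0 < (f (x + h) - f x) / h.
Proof.
  intros H Hl. apply is_derive_Reals in H.
  destruct (H l Hl) as [d Hd]. exists d. split. apply (cond_pos d).
  intros h Hh Hhd. specialize (Hd h Hh Hhd).
  apply Rabs_def2 in Hd. lra.
Qed.

Theorem lemma7 (b : nat -> R)
  (hnn : forall k, (1 <= k)%nat -> 0 <= b k)
  (hsum : ex_series (fun n => INR (S n) * b (S n)))
  (tstar : R)
  (hinf : is_inf (fun t => 0 <= t < 1 /\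
                   Derive (beta_fun b) t + ln (1 - t) < 0) tstar) :
  (1 - tstar) * Derive_n (beta_fun b) 2 tstar <= 1.
Proof.
  destruct hinf as [Hlb Hglb].
  set (M := Series (fun n => INR (S n) * b (S n))) in *.
  set (t0 := 1 - exp (- (Rabs M + 1))).
  assert (He : 0 < exp (- (Rabs M + 1)) < 1).
  { split. apply exp_pos.
    assert (exp (- (Rabs M + 1)) < exp 0) by (apply exp_increasing; pose proof (Rabs_pos M); lra).
    rewrite exp_0 in H. exact H. }
  assert (Ht0 : 0 <= t0 < 1) by (unfold t0; lra).
  assert (Hst0 : tstar <= t0).
  { apply Hlb. split; auto. replace (1 - t0) with (exp (- (Rabs M + 1))) by (unfold t0; ring).
    rewrite ln_exp. pose proof (Dbeta_le b hnn hsum t0 Ht0). fold M in H.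
    pose proof (Rle_abs M). lra. }
  assert (Hs0 : 0 <= tstar).
  { apply Hglb. intros t [[Ht _] _]. exact Ht. }
  assert (Hs1 : Rabs tstar < 1) by (rewrite Rabs_pos_eq; lra).
  set (g := Derive (beta_fun b)).
  set (f := fun t => g t + ln (1 - t)).
  assert (Hg := Derive_correct _ _ (ex_D2 b hnn hsum tstar Hs1)).
  change (Derive_n (beta_fun b) 2 tstar) with (Derive g tstar).
  set (D := Derive g tstar) in *.
  apply Rnot_lt_le. intro Hc.
  assert (Hl : 0 < D - 1 / (1 - tstar)).
  { replace (D - 1 / (1 - tstar)) with (((1 - tstar) * D - 1) / (1 - tstar)) by (field; lra).
    apply Rdiv_lt_0_compat; lra. }
  assert (Hf : is_derive f tstar (D - 1 / (1 - tstar))).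
  { unfold f. replace (D - 1 / (1 - tstar)) with (D + (-1) * / (1 - tstar)) by (field; lra).
    apply (is_derive_plus g (fun t => ln (1 - t))); auto.
    auto_derive. lra. field. lra. }
  destruct (deriv_sign f tstar _ Hf Hl) as [d [Hd Hdh]].
  assert (Hf0 : 0 <= f tstar).
  { destruct (Req_dec tstar 0) as [E|E].
    - rewrite E. unfold f, g. rewrite (Dbeta b hnn hsum); [|rewrite Rabs_R0; lra].
      rewrite PSeries_0, der_term, Rminus_0_r, ln_1, Rplus_0_r.
      apply Rmult_le_pos. apply pos_INR. apply hnn. lia.
    - apply Rnot_lt_le. intro Hneg.
      set (h := - Rmin tstar d / 2).
      assert (Hm : 0 < Rmin tstar d) by (apply Rmin_pos; lra).
      assert (Hm1 : Rmin tstar d <= tstar) by apply Rmin_l.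
      assert (Hm2 : Rmin tstar d <= d) by apply Rmin_r.
      assert (Hh : h < 0) by (unfold h; lra).
      assert (Hq := Hdh h ltac:(lra) ltac:(rewrite Rabs_left; unfold h; lra)).
      assert (Hlt : f (tstar + h) - f tstar < 0).
      { replace (f (tstar + h) - f tstar) with ((f (tstar + h) - f tstar) / h * h) by (field; lra).
        apply Rmult_pos_neg; [exact Hq|exact Hh]. }
      assert (tstar <= tstar + h).
      { apply Hlb. split. unfold h; lra. fold g. fold (f (tstar + h)). lra. }
      lra. }
  assert (tstar + d <= tstar).
  { apply Hglb. intros t [Ht Hft]. apply Rnot_lt_le. intro Htd.
    pose proof (Hlb t (conj Ht Hft)).
    destruct (Req_dec t tstar) as [E|E].
    - subst t. fold g in Hft. fold (f tstar) in Hft. lra.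
    - assert (Hq := Hdh (t - tstar) ltac:(lra) ltac:(rewrite Rabs_pos_eq; lra)).
      replace (tstar + (t - tstar)) with t in Hq by ring.
      fold g in Hft. fold (f t) in Hft.
      assert (0 < f t - f tstar).
      { apply Rmult_lt_reg_r with (/ (t - tstar)).
        apply Rinv_0_lt_compat; lra. rewrite Rmult_0_l. exact Hq. }
      lra. }
  lra.
Qed.
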